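(* Each of the following, with the convention $\boldsymbol{\alpha}_0=\boldsymbol{\beta}_0=1$ and the displayed formulas valid for $n\ge1$, is a WP-Bailey pair (with the indicated value of $a$, and arbitrary generic $k$): (i) ($a=q$) $\boldsymbol{\alpha}_n=\dfrac{(-1)^n(q^{-n}-q^{n+1})}{1-q}$, $\boldsymbol{\beta}_n=\dfrac{(-1)^n(k^2;q^2)_n}{q^n(q^2;q^2)_n}$; (ii) ($a=q$) $\boldsymbol{\alpha}_n=\dfrac{q^{-n/2}+q^{n/2+1/2}}{1+q^{1/2}}$, $\boldsymbol{\beta}_n=\dfrac{(k,kq^{-1/2};q)_n}{(q^{3/2},q;q)_n}\,q^{-n/2}$; (iii) ($a=1$) $\boldsymbol{\alpha}_n=(-1)^nq^{-n^2/2}(q^{-n/2}+q^{n/2})$, $\boldsymbol{\beta}_n=\dfrac{(-1)^n(k;q)_n}{q^{(n^2+n)/2}(q;q)_n}$.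
   Context: Notation: $(x;q)_n=\prod_{i=0}^{n-1}(1-xq^i)$, $(x_1,\dots,x_j;q)_n=(x_1;q)_n\cdots(x_j;q)_n$. A pair of sequences $(\boldsymbol{\alpha}_n(a,k,q),\boldsymbol{\beta}_n(a,k,q))_{n\ge0}$ is a WP-Bailey pair (relative to $a$, with parameter $k$) if $\boldsymbol{\alpha}_0=1$ and for all $n\ge0$ \[\boldsymbol{\beta}_n=\sum_{j=0}^n\frac{(k/a;q)_{n-j}(k;q)_{n+j}}{(q;q)_{n-j}(aq;q)_{n+j}}\boldsymbol{\alpha}_j.\] *)

(* Defs.v *)
From HB Require Import structures.
From mathcomp Require Import all_boot all_order all_algebra.
Set Implicit Arguments. Unset Strict Implicit. Unset Printing Implicit Defensive.
Import Order.TTheory GRing.Theory Num.Theory.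
Local Open Scope ring_scope.

Definition qpoch (R : ringType) (x q : R) (n : nat) : R :=
  \prod_(i < n) (1 - x * q ^+ i).

Definition WP_Bailey_pair (R : fieldType) (a k q : R) (alpha beta : nat -> R) : Prop :=
  alpha 0%N = 1 /\
  forall n : nat,
    beta n = \sum_(j < n.+1)
      (qpoch (k / a) q (n - j) * qpoch k q (n + j))
        / (qpoch q q (n - j) * qpoch (a * q) q (n + j)) * alpha j.

(* Main.v *)
Require Import Defs.
From HB Require Import structures.
From mathcomp Require Import all_boot all_order all_algebra.
From mathcomp Require Import ring zify.
Import GRing.Theory.
Local Open Scope ring_scope.

Lemma qpoch0 (R : ringType) (x q : R) : qpoch x q 0 = 1.
Proof. by rewrite /qpoch big_ord0. Qed.

Lemma qpochS (R : ringType) (x q : R) n :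
  qpoch x q n.+1 = qpoch x q n * (1 - x * q ^+ n).
Proof. by rewrite /qpoch big_ord_recr. Qed.

Lemma qpoch_nz (R : fieldType) (x q : R) N :
  (forall i, 1 - x * q ^+ i != 0) -> qpoch x q N != 0.
Proof. by move=> h; rewrite /qpoch; apply/prodf_neq0 => i _. Qed.

Lemma tele (R : fieldType) (T H : nat -> nat -> R) (c beta : nat -> R) :
  beta 0%N = T 0%N 0%N ->
  (forall n, beta n.+1 = c n * beta n) ->
  (forall n, H n 0%N = 0) ->
  (forall n j, (j <= n)%N -> T n.+1 j - c n * T n j = H n j.+1 - H n j) ->
  (forall n, T n.+1 n.+1 = - H n n.+1) ->
  forall n, beta n = \sum_(j < n.+1) T n j.
Proof.
move=> b0 bS H0 hp hb; elim=> [|n IH]; first by rewrite big_ord1.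
have key : forall m, (m <= n.+1)%N ->
   \sum_(j < m) (T n.+1 j - c n * T n j) = H n m - H n 0%N.
  elim=> [|m IHm] hm; first by rewrite big_ord0 subrr.
  rewrite big_ord_recr /= IHm; last by lia.
  rewrite hp; last by lia.
  by rewrite addrC addrA subrK.
rewrite bS IH [in RHS]big_ord_recr /=.
have -> : T n.+1 (@ord_max n.+1) = - H n n.+1 by exact: hb.
have := key n.+1 (leqnn _); rewrite H0 subr0 => e.
have -> : \sum_(j < n.+1) T n.+1 j =
   \sum_(j < n.+1) (T n.+1 j - c n * T n j) + c n * \sum_(j < n.+1) T n j.
  by rewrite mulr_sumr -big_split /=; apply: eq_bigr => i _; rewrite subrK.
by rewrite e addrC addrA addNr add0r.
Qed.

Lemma nzs (R : fieldType) (s : R) :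
  (forall m : nat, (0 < m)%N -> (s ^+ 2) ^+ m != 1) ->
  forall N, (0 < N)%N -> 1 - s ^+ N != 0.
Proof.
move=> hq N hN; rewrite subr_eq0 eq_sym; apply/negP => /eqP e.
by have := hq N hN; rewrite exprAC e expr1n eqxx.
Qed.

Ltac nz1 hN := first [ assumption | (apply: expf_neq0; assumption)
  | (apply: qpoch_nz => i; rewrite ?mul1r; do 4 rewrite -?expr2 -?exprM -?exprS -?exprD; apply: hN; lia)
  | (rewrite ?mul1r; do 4 rewrite -?expr2 -?exprM -?exprS -?exprD; apply: hN; lia) | idtac ].
Ltac nz_tac hN := repeat (apply/andP; split); nz1 hN.

Lemma case_ii (R : fieldType) (s k : R) :
  s ^+ 2 != 0 ->
  (forall m : nat, (0 < m)%N -> (s ^+ 2) ^+ m != 1) ->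
  WP_Bailey_pair (s^+2) k (s^+2)
    (fun n => if n == 0%N then 1 else (s ^- n + s ^+ n.+1) / (1 + s))
    (fun n => if n == 0%N then 1
              else qpoch k (s^+2) n * qpoch (k * s^-1) (s^+2) n
                   / (qpoch (s ^+ 3) (s^+2) n * qpoch (s^+2) (s^+2) n) * s ^- n).
Proof.
move=> hs2 hq.
have s0 : s != 0 by apply: contraNneq hs2 => ->; rewrite expr0n.
have hN := @nzs _ s hq.
have s1 : 1 + s != 0.
  apply: contraNneq (hN 2%N isT) => e.
  rewrite (_ : 1 - s^+2 = (1-s)*(1+s)); first by rewrite e mulr0.
  ring.
have al : forall j, (if j == 0%N then 1 else (s ^- j + s ^+ j.+1) / (1 + s))
    = (s ^- j + s ^+ j.+1) / (1 + s).
  by case=> [|j] //=; rewrite expr0 invr1 expr1 divff.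
have be : forall n, (if n == 0%N then 1
              else qpoch k (s^+2) n * qpoch (k * s^-1) (s^+2) n
                   / (qpoch (s ^+ 3) (s^+2) n * qpoch (s^+2) (s^+2) n) * s ^- n) =
     qpoch k (s^+2) n * qpoch (k * s^-1) (s^+2) n
                   / (qpoch (s ^+ 3) (s^+2) n * qpoch (s^+2) (s^+2) n) * s ^- n.
  by case=> [|n] //=; rewrite !qpoch0 expr0 invr1 !mulr1 invr1 mulr1.
split => //.
apply: (@tele R
  (fun n j => qpoch (k / s^+2) (s^+2) (n - j) * qpoch k (s^+2) (n + j)
             / (qpoch (s^+2) (s^+2) (n - j) * qpoch (s^+2 * s^+2) (s^+2) (n + j))
             * (if j == 0%N then 1 else (s ^- j + s ^+ j.+1) / (1 + s)))
  (fun n j => - (1 - k * s^+2 * ((s^+2)^+n)^+2) /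
                 ((1+s) * (1 - s^+3 * (s^+2)^+n) * (1 - s^+2 * (s^+2)^+n))
          * (1 - (s^+2)^+j) * s^-j
          * (qpoch (k / s^+2) (s^+2) (n.+1 - j) * qpoch k (s^+2) (n + j)
             / (qpoch (s^+2) (s^+2) (n.+1 - j) * qpoch (s^+2 * s^+2) (s^+2) (n + j))))
  (fun n => (1 - k * (s^+2)^+n) * (1 - k * s^-1 * (s^+2)^+n) * s^-1 /
                 ((1 - s^+3 * (s^+2)^+n) * (1 - s^+2 * (s^+2)^+n)))).
- by rewrite /= !qpoch0 !(mul1r, mulr1, invr1).
- move=> n /=; rewrite be !qpochS [s^+n.+1]exprS invfM.
  by field; nz_tac hN.
- by move=> n; rewrite expr0 subrr !mulr0 !mul0r.
- move=> n j hj; rewrite -(subnK hj); set m := (n - j)%N; clearbody m.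
  rewrite !al subSn ?leq_addl // !addnK addSn addnS subSS addnK.
  rewrite !qpochS [s^+j.+1]exprS [(s^+2)^+j.+1]exprS !exprD [(s^+2)^+j]exprAC.
  by field; nz_tac hN.
- move=> n /=; rewrite subnn !qpoch0 addSn !addnS !qpochS.
  rewrite [s^+n.+2]exprS [s^+n.+1]exprS ![(s^+2)^+ _.+1]exprS !exprD [(s^+2)^+n]exprAC.
  by field; nz_tac hN.
Qed.

Lemma case_i (R : fieldType) (s k : R) :
  s ^+ 2 != 0 ->
  (forall m : nat, (0 < m)%N -> (s ^+ 2) ^+ m != 1) ->
  WP_Bailey_pair (s^+2) k (s^+2)
    (fun n => if n == 0%N then 1
              else (-1) ^+ n * ((s^+2) ^- n - (s^+2) ^+ n.+1) / (1 - s^+2))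
    (fun n => if n == 0%N then 1
              else (-1) ^+ n * qpoch (k ^+ 2) ((s^+2) ^+ 2) n
                   / ((s^+2) ^+ n * qpoch ((s^+2) ^+ 2) ((s^+2) ^+ 2) n)).
Proof.
move=> hs2 hq.
have s0 : s != 0 by apply: contraNneq hs2 => ->; rewrite expr0n.
have hN := @nzs _ s hq.
have s1 : 1 - s^+2 != 0 by apply: hN.
have al : forall j, (if j == 0%N then 1
              else (-1) ^+ j * ((s^+2) ^- j - (s^+2) ^+ j.+1) / (1 - s^+2))
    = (-1) ^+ j * ((s^+2) ^- j - (s^+2) ^+ j.+1) / (1 - s^+2).
  by case=> [|j] //=; rewrite !expr0 invr1 expr1 mul1r divff.
have be : forall n, (if n == 0%N then 1
              else (-1) ^+ n * qpoch (k ^+ 2) ((s^+2) ^+ 2) n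
                   / ((s^+2) ^+ n * qpoch ((s^+2) ^+ 2) ((s^+2) ^+ 2) n)) =
     (-1) ^+ n * qpoch (k ^+ 2) ((s^+2) ^+ 2) n
                   / ((s^+2) ^+ n * qpoch ((s^+2) ^+ 2) ((s^+2) ^+ 2) n).
  by case=> [|n] //=; rewrite !qpoch0 !expr0 !(mul1r, mulr1, invr1).
split => //.
apply: (@tele R
  (fun n j => qpoch (k / s^+2) (s^+2) (n - j) * qpoch k (s^+2) (n + j)
             / (qpoch (s^+2) (s^+2) (n - j) * qpoch (s^+2 * s^+2) (s^+2) (n + j))
             * (if j == 0%N then 1
              else (-1) ^+ j * ((s^+2) ^- j - (s^+2) ^+ j.+1) / (1 - s^+2)))
  (fun n j => - (1 - k * s^+2 * ((s^+2)^+n)^+2) /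
                 ((1 - s^+2) * (1 - (s^+2)^+2 * ((s^+2)^+n)^+2))
          * (1 - ((s^+2)^+j)^+2) * (-1)^+j * ((s^+2)^+j)^-1
          * (qpoch (k / s^+2) (s^+2) (n.+1 - j) * qpoch k (s^+2) (n + j)
             / (qpoch (s^+2) (s^+2) (n.+1 - j) * qpoch (s^+2 * s^+2) (s^+2) (n + j))))
  (fun n => - (1 - k^+2 * ((s^+2)^+n)^+2) /
                 (s^+2 * (1 - (s^+2)^+2 * ((s^+2)^+n)^+2)))).
- by rewrite /= !qpoch0 !(mul1r, mulr1, invr1).
- move=> n /=; rewrite be !qpochS [(-1)^+n.+1]exprS [(s^+2)^+n.+1]exprS.
  rewrite [((s^+2)^+2)^+n]exprAC.
  by field; nz_tac hN.
- by move=> n; rewrite expr0 expr1n subrr !mulr0 !mul0r.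
- move=> n j hj; rewrite -(subnK hj); set m := (n - j)%N; clearbody m.
  rewrite !al subSn ?leq_addl // !addnK addSn addnS subSS addnK.
  rewrite !qpochS [(-1)^+j.+1]exprS [(s^+2)^+j.+1]exprS !exprD.
  rewrite [(s^+2)^+j]exprAC.
  by field; nz_tac hN.
- move=> n /=; rewrite subnn !qpoch0 addSn !addnS !qpochS.
  rewrite [(-1)^+n.+1]exprS [(s^+2)^+n.+2]exprS ![(s^+2)^+ _.+1]exprS !exprD [(s^+2)^+n]exprAC.
  by field; nz_tac hN.
Qed.

Lemma case_iii (R : fieldType) (s k : R) :
  s ^+ 2 != 0 ->
  (forall m : nat, (0 < m)%N -> (s ^+ 2) ^+ m != 1) ->
  WP_Bailey_pair 1 k (s^+2)
    (fun n => if n == 0%N then 1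
              else (-1) ^+ n * s ^- (n * n) * (s ^- n + s ^+ n))
    (fun n => if n == 0%N then 1
              else (-1) ^+ n * qpoch k (s^+2) n
                   / (s ^+ (n * n + n) * qpoch (s^+2) (s^+2) n)).
Proof.
move=> hs2 hq.
have s0 : s != 0 by apply: contraNneq hs2 => ->; rewrite expr0n.
have hN := @nzs _ s hq.
have be : forall n, (if n == 0%N then 1
              else (-1) ^+ n * qpoch k (s^+2) n
                   / (s ^+ (n * n + n) * qpoch (s^+2) (s^+2) n)) =
     (-1) ^+ n * qpoch k (s^+2) n
                   / (s ^+ (n * n + n) * qpoch (s^+2) (s^+2) n).
  by case=> [|n] //=; rewrite !qpoch0 !expr0 !(mul1r, mulr1, invr1).
split => //.
apply: (@tele R
  (fun n j => qpoch (k / 1) (s^+2) (n - j) * qpoch k (s^+2) (n + j)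
             / (qpoch (s^+2) (s^+2) (n - j) * qpoch (1 * s^+2) (s^+2) (n + j))
             * (if j == 0%N then 1
              else (-1) ^+ j * s ^- (j * j) * (s ^- j + s ^+ j)))
  (fun n j => if j == 0%N then 0 else
          - (1 - k * s^+2 * ((s^+2)^+n)^+2) /
                 (s^+2 * (s^+2)^+n * (1 - s^+2 * (s^+2)^+n))
          * (-1)^+j * s ^- (j * j) * s ^+ j
          * (qpoch (k / 1) (s^+2) (n.+1 - j) * qpoch k (s^+2) (n + j)
             / (qpoch (s^+2) (s^+2) (n.+1 - j) * qpoch (1 * s^+2) (s^+2) (n + j))))
  (fun n => - (1 - k * (s^+2)^+n) /
                 (s^+2 * (s^+2)^+n * (1 - s^+2 * (s^+2)^+n)))).
- by rewrite /= !qpoch0 !(mul1r, mulr1, invr1).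
- move=> n /=; rewrite be !qpochS [(-1)^+n.+1]exprS.
  have -> : s^+(n.+1*n.+1+n.+1) = s^+(n*n+n) * s^+2 * (s^+2)^+n.
    by rewrite -exprM -!exprD; congr (_ ^+ _); nia.
  by field; nz_tac hN.
- by [].
- move=> n [|j] hj /=.
    rewrite !subn0 !addn0 subn1 /= addn1 muln1 expr1 !qpochS.
    rewrite ?divr1 ?mul1r.
    by field; nz_tac hN.
  move: (j.+1) hj => J hJ.
  rewrite -(subnK hJ); set m := (n - J)%N; clearbody m.
  rewrite subSn ?leq_addl // !addnK addSn addnS subSS addnK.
  rewrite (_ : (J.+1 * J.+1 = J * J + J + J + 1)%N); last by nia.
  rewrite !qpochS [(-1)^+J.+1]exprS [s^+J.+1]exprS !exprD expr1.
  rewrite [(s^+2)^+J]exprAC ?divr1 ?mul1r.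
  by field; nz_tac hN.
- move=> n /=; rewrite subnn !qpoch0 addSn !addnS !qpochS.
  rewrite (_ : (n.+1 * n.+1 = n * n + n + n + 1)%N); last by nia.
  rewrite [(-1)^+n.+1]exprS [s^+n.+1]exprS ![(s^+2)^+ _.+1]exprS !exprD expr1 [(s^+2)^+n]exprAC ?divr1 ?mul1r.
  by field; nz_tac hN.
Qed.
(* s plays the role of q^(1/2) *)
Theorem mainTheorem6 (R : fieldType) (s k : R) :
  s ^+ 2 != 0 ->
  (forall m : nat, (0 < m)%N -> (s ^+ 2) ^+ m != 1) ->
  let q := s ^+ 2 in
  (* (i), a = q *)
  WP_Bailey_pair q k q
    (fun n => if n == 0%N then 1
              else (-1) ^+ n * (q ^- n - q ^+ n.+1) / (1 - q))
    (fun n => if n == 0%N then 1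
              else (-1) ^+ n * qpoch (k ^+ 2) (q ^+ 2) n
                   / (q ^+ n * qpoch (q ^+ 2) (q ^+ 2) n))
  /\
  (* (ii), a = q *)
  WP_Bailey_pair q k q
    (fun n => if n == 0%N then 1
              else (s ^- n + s ^+ n.+1) / (1 + s))
    (fun n => if n == 0%N then 1
              else qpoch k q n * qpoch (k * s^-1) q n
                   / (qpoch (s ^+ 3) q n * qpoch q q n) * s ^- n)
  /\
  (* (iii), a = 1 *)
  WP_Bailey_pair 1 k q
    (fun n => if n == 0%N then 1
              else (-1) ^+ n * s ^- (n * n) * (s ^- n + s ^+ n))
    (fun n => if n == 0%N then 1
              else (-1) ^+ n * qpoch k q n
                   / (s ^+ (n * n + n) * qpoch q q n)).
Proof.
move=> hs2 hq q.
split; first exact: case_i.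
split; first exact: case_ii.
exact: case_iii.
Qed.
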